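(* Let $T \in \mathbb{R}^{n_1} \otimes \mathbb{R}^{n_2} \otimes \mathbb{R}^{n_3}$ and let $v \in \mathbb{R}^{n_1} \otimes \mathbb{R}^{n_2} \otimes \mathbb{R}^{n_3}$ be a rank-one tensor. Then $Q(T + v) \geq Q(T) - 1$.
   Context: A rank-one tensor is a nonzero tensor of the form $v_1 \otimes v_2 \otimes v_3$. For $r \geq 0$ let $I_r := \sum_{j=1}^r e_j \otimes e_j \otimes e_j$. The subrank of $T$ is $Q(T) := \max\{ r \mid \exists\ \mathbb{R}\text{-linear } \varphi_i : \mathbb{R}^{n_i} \to \mathbb{R}^r,\ (\varphi_1 \otimes \varphi_2 \otimes \varphi_3) T = I_r\}$. *)

(* Defs.v *)
From HB Require Import structures.
From mathcomp Require Import all_boot all_order all_algebra.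
From mathcomp Require Import boolp reals.
Set Implicit Arguments. Unset Strict Implicit. Unset Printing Implicit Defensive.
Import Order.TTheory GRing.Theory Num.Theory.
Local Open Scope ring_scope.

Definition tensor (R : Type) (n1 n2 n3 : nat) := 'I_n1 -> 'I_n2 -> 'I_n3 -> R.

Definition tadd (R : realType) n1 n2 n3 (T S : tensor R n1 n2 n3) : tensor R n1 n2 n3 :=
  fun i j k => T i j k + S i j k.

Definition outer3 (R : realType) n1 n2 n3
  (v1 : 'I_n1 -> R) (v2 : 'I_n2 -> R) (v3 : 'I_n3 -> R) : tensor R n1 n2 n3 :=
  fun i j k => v1 i * v2 j * v3 k.

Definition rank_one (R : realType) n1 n2 n3 (v : tensor R n1 n2 n3) : Prop :=
  (exists i j k, v i j k != 0) /\
  exists v1 v2 v3, forall i j k, v i j k = outer3 v1 v2 v3 i j k.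

Definition unit_tensor (R : realType) (r : nat) : tensor R r r r :=
  fun a b c => ((a == b) && (b == c))%:R.

(* (phi1 (x) phi2 (x) phi3) T, where phi_i : R^{n_i} -> R^r is the linear map
   given by the matrix A_i : 'M_(r, n_i). *)
Definition tmap (R : realType) n1 n2 n3 r
  (A1 : 'M[R]_(r, n1)) (A2 : 'M[R]_(r, n2)) (A3 : 'M[R]_(r, n3))
  (T : tensor R n1 n2 n3) : tensor R r r r :=
  fun a b c => \sum_(i < n1) \sum_(j < n2) \sum_(k < n3)
                 A1 a i * A2 b j * A3 c k * T i j k.

Definition restricts_to_unit (R : realType) n1 n2 n3 (T : tensor R n1 n2 n3) (r : nat) : Prop :=
  exists (A1 : 'M[R]_(r, n1)) (A2 : 'M[R]_(r, n2)) (A3 : 'M[R]_(r, n3)),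
    tmap A1 A2 A3 T = @unit_tensor R r.

(* Any such r satisfies
   r <= n1 (the first flattening of I_r has rank r), so the maximum over
   r <= n1 is the true maximum; r = 0 always qualifies. *)
Definition subrank (R : realType) n1 n2 n3 (T : tensor R n1 n2 n3) : nat :=
  (\max_(r < n1.+1 | `[< restricts_to_unit T r >]) (r : nat))%N.

(* Main.v *)
Require Import Defs.
From mathcomp Require Import all_boot all_order all_algebra.
From mathcomp Require Import boolp reals ring.
Set Implicit Arguments. Unset Strict Implicit. Unset Printing Implicit Defensive.
Import Order.TTheory GRing.Theory Num.Theory.
Local Open Scope ring_scope.

Section S.
Variable R : realType.

Lemma tmap_add n1 n2 n3 r (A1 : 'M[R]_(r, n1)) (A2 : 'M[R]_(r, n2)) (A3 : 'M[R]_(r, n3))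
  (T S : tensor R n1 n2 n3) :
  tmap A1 A2 A3 (tadd T S) = tadd (tmap A1 A2 A3 T) (tmap A1 A2 A3 S).
Proof.
apply: funext => a; apply: funext => b; apply: funext => c.
rewrite /tmap /tadd -!big_split; apply: eq_bigr => i _.
rewrite -!big_split; apply: eq_bigr => j _.
rewrite -!big_split; apply: eq_bigr => k _.
by rewrite mulrDr.
Qed.

Definition vmap r n (A : 'M[R]_(r, n)) (u : 'I_n -> R) : 'I_r -> R :=
  fun a => \sum_(i < n) A a i * u i.

Lemma tmap_outer n1 n2 n3 r (A1 : 'M[R]_(r, n1)) (A2 : 'M[R]_(r, n2)) (A3 : 'M[R]_(r, n3))
  u1 u2 u3 :
  tmap A1 A2 A3 (outer3 u1 u2 u3) = outer3 (vmap A1 u1) (vmap A2 u2) (vmap A3 u3).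
Proof.
apply: funext => a; apply: funext => b; apply: funext => c.
rewrite /tmap /outer3 /vmap mulr_suml mulr_suml; apply: eq_bigr => i _.
rewrite [_ * (\sum_(i0 < n2) _)]mulr_sumr mulr_suml; apply: eq_bigr => j _.
rewrite mulr_sumr; apply: eq_bigr => k _.
by ring.
Qed.

Lemma sum_ind n (F : 'I_n -> R) i : \sum_(j < n) (i == j)%:R * F j = F i.
Proof.
rewrite (eq_bigr (fun j => if j == i then F j else 0)); last first.
  by move=> j _; rewrite eq_sym; case: (j == i); rewrite /= ?mulr1n ?mulr0n ?mul1r ?mul0r.
by rewrite -big_mkcond big_pred1_eq.
Qed.

Lemma tmap_unit n r (A1 A2 A3 : 'M[R]_(r, n)) a b c :
  tmap A1 A2 A3 (@unit_tensor R n) a b c = \sum_(i < n) A1 a i * A2 b i * A3 c i.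
Proof.
rewrite /tmap; apply: eq_bigr => i _.
have E : forall j k, A1 a i * A2 b j * A3 c k * unit_tensor R i j k
   = (j == k)%:R * ((i == j)%:R * (A1 a i * A2 b j * A3 c k)).
  move=> j k; rewrite /unit_tensor.
  by case: (i == j); case: (j == k); rewrite /= ?mulr1n ?mulr0n ?mul1r ?mul0r ?mulr1 ?mulr0.
under eq_bigr => j _ do under eq_bigr => k _ do rewrite E.
under eq_bigr => j _ do rewrite sum_ind.
by rewrite sum_ind.
Qed.

Lemma swap6 (I1 I2 I3 J1 J2 J3 : finType) (F : I1 -> I2 -> I3 -> J1 -> J2 -> J3 -> R) :
  \sum_(i : I1) \sum_(j : I2) \sum_(k : I3) \sum_(a : J1) \sum_(b : J2) \sum_(c : J3) F i j k a b c
  = \sum_(a : J1) \sum_(b : J2) \sum_(c : J3) \sum_(i : I1) \sum_(j : I2) \sum_(k : I3) F i j k a b c.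
Proof.
under eq_bigr => i _ do under eq_bigr => j _ do rewrite exchange_big.
under eq_bigr => i _ do rewrite exchange_big.
rewrite exchange_big.
under eq_bigr => a _ do under eq_bigr => i _ do under eq_bigr => j _ do rewrite exchange_big.
under eq_bigr => a _ do under eq_bigr => i _ do rewrite exchange_big.
under eq_bigr => a _ do rewrite exchange_big.
under eq_bigr => a _ do under eq_bigr => b _ do under eq_bigr => i _ do under eq_bigr => j _ do rewrite exchange_big.
under eq_bigr => a _ do under eq_bigr => b _ do under eq_bigr => i _ do rewrite exchange_big.
under eq_bigr => a _ do under eq_bigr => b _ do rewrite exchange_big.
by [].
Qed.

Lemma prod3 (J1 J2 J3 : finType) (f : J1 -> R) (g : J2 -> R) (h : J3 -> R) t :
  (\sum_a f a) * (\sum_b g b) * (\sum_c h c) * t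
  = \sum_a \sum_b \sum_c f a * g b * h c * t.
Proof.
rewrite !mulr_suml; apply: eq_bigr => a _.
rewrite -!mulrA mulr_suml mulr_sumr; apply: eq_bigr => b _.
rewrite mulr_suml !mulr_sumr; apply: eq_bigr => c _.
by rewrite !mulrA.
Qed.

Lemma tmap_comp n1 n2 n3 r s (A1 : 'M[R]_(r, n1)) (A2 : 'M[R]_(r, n2)) (A3 : 'M[R]_(r, n3))
  (P1 P2 P3 : 'M[R]_(s, r)) (T : tensor R n1 n2 n3) :
  tmap (P1 *m A1) (P2 *m A2) (P3 *m A3) T = tmap P1 P2 P3 (tmap A1 A2 A3 T).
Proof.
apply: funext => x; apply: funext => y; apply: funext => z.
rewrite /tmap.
under eq_bigr => i _ do under eq_bigr => j _ do under eq_bigr => k _ do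
  rewrite !mxE prod3.
rewrite swap6.
apply: eq_bigr => a _; apply: eq_bigr => b _; apply: eq_bigr => c _.
rewrite !mulr_sumr; apply: eq_bigr => i _.
rewrite !mulr_sumr; apply: eq_bigr => j _.
rewrite !mulr_sumr; apply: eq_bigr => k _.
by ring.
Qed.

Lemma key n1 n2 n3 (T : tensor R n1 n2 n3) v1 v2 v3 r' :
  restricts_to_unit T r'.+1 -> restricts_to_unit (tadd T (outer3 v1 v2 v3)) r'.
Proof.
move=> [A1 [A2 [A3 HA]]].
set a := vmap A1 v1.
have [p Hp] : exists p : 'I_r'.+1, forall x, a x = a x / a p * a p.
  case: (pselect (exists p, a p != 0)) => [[p hp]|hn].
    by exists p => x; rewrite divfK.
  exists ord0 => x; case: (eqVneq (a x) 0) => [->|hx]; first by rewrite !mul0r.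
  by exfalso; apply: hn; exists x.
pose Psi : 'M[R]_(r', r'.+1) := \matrix_(i, j) (lift p i == j)%:R.
pose Phi : 'M[R]_(r', r'.+1) :=
  \matrix_(i, j) ((lift p i == j)%:R - (p == j)%:R * (a (lift p i) / a p)).
exists (Phi *m A1), (Psi *m A2), (Psi *m A3).
rewrite tmap_comp tmap_add HA tmap_outer tmap_add tmap_outer.
apply: funext => x; apply: funext => y; apply: funext => z.
rewrite /tadd tmap_unit /outer3.
have Z : vmap Phi a x = 0.
  rewrite /vmap; under eq_bigr => j _ do rewrite mxE mulrBl -mulrA.
  by rewrite sumrB !sum_ind -Hp subrr.
rewrite Z !mul0r addr0.
under eq_bigr => i _ do rewrite [Psi y i]mxE mulrAC mulrC.
rewrite sum_ind !mxE (negbTE (neq_lift p y)) mul0r subr0.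
rewrite (inj_eq (@lift_inj _ p)) (inj_eq (@lift_inj _ p)) /unit_tensor [z == y]eq_sym.
by case: (x == y); case: (y == z); rewrite /= ?mulr1n ?mulr0n ?mul1r ?mul0r ?mulr1 ?mulr0.
Qed.
End S.

Lemma subrank_prop (R : realType) n1 n2 n3 (T : tensor R n1 n2 n3) :
  (subrank T <= n1)%N /\ (subrank T = 0%N \/ restricts_to_unit T (subrank T)).
Proof.
rewrite /subrank.
apply: (big_ind (fun m => (m <= n1)%N /\ (m = 0%N \/ restricts_to_unit T m))).
- by split; [|left].
- by move=> x y Hx Hy; rewrite /maxn; case: ifP.
- by move=> i /asboolP H; split; [rewrite -ltnS (ltn_ord i) | right].
Qed.

Theorem lemma3p1 (R : realType) (n1 n2 n3 : nat)
  (T v : tensor R n1 n2 n3) :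
  rank_one v ->
  (subrank T - 1 <= subrank (tadd T v))%N.
Proof.
move=> [_ [v1 [v2 [v3 Hv]]]].
have -> : v = outer3 v1 v2 v3.
  by apply: funext => i; apply: funext => j; apply: funext => k.
have [Hle Hr] := subrank_prop T.
move: Hle Hr; case E: (subrank T) => [|r'] Hle Hr //.
case: Hr => // Hr.
rewrite subSS subn0.
have Hlt : (r' < n1.+1)%N by apply: ltnW.
rewrite /subrank; apply: (bigop.bigmax_sup (Ordinal Hlt)) => //.
by apply/asboolP; apply: key.
Qed.
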